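(* Let $K$ be a field of characteristic zero, and suppose $F\in K[X]$ has the property that $u\circ F\circ v$ has at least two monomial terms whenever $u,v\in K[X]$ are of degree one. Then the equation $F\circ b=a\circ F$ has only finitely many solutions in degree-one polynomials $a,b\in K[X]$.
   Context: $\circ$ denotes composition of polynomials. *)

(* Defs.v *)
From mathcomp Require Import all_boot all_order all_algebra.
Set Implicit Arguments. Unset Strict Implicit. Unset Printing Implicit Defensive.
Import GRing.Theory.
Local Open Scope ring_scope.

Definition nterms (K : fieldType) (p : {poly K}) : nat :=
  count (fun c : K => c != 0) (polyseq p).

(* Main.v *)
Require Import Defs.
From mathcomp Require Import all_boot all_order all_algebra.
From mathcomp Require Import ring.
From Stdlib Require Import Classical.
Import GRing.Theory.
Local Open Scope ring_scope.

Section Aux.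
Context {K : fieldType}.
Implicit Types p q : {poly K}.

Lemma lin_repr p : (size p <= 2)%N -> p = p`_1 *: 'X + (p`_0)%:P.
Proof.
move=> Hp; apply/polyP => i; rewrite coefD coefZ coefX coefC.
case: i => [|[|i]] /=; rewrite ?mulr0 ?mulr1 ?add0r ?addr0 //.
by rewrite nth_default // (leq_trans Hp).
Qed.

Lemma derivn_comp_lin p k (g d : K) :
  (p \Po (g *: 'X + d%:P))^`(k) = g ^+ k *: (p^`(k) \Po (g *: 'X + d%:P)).
Proof.
elim: k => [|k IH]; first by rewrite !derivn0 expr0 scale1r.
rewrite derivnS IH derivZ deriv_comp derivD derivZ derivX derivC addr0.
by rewrite -derivnS -scalerAr mulr1 scalerA exprSr.
Qed.

Lemma coef_comp_scaleX p (g : K) j : (p \Po (g *: 'X))`_j = p`_j * g ^+ j.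
Proof.
have -> : p \Po (g *: 'X) = \poly_(i < size p) (p`_i * g ^+ i).
  rewrite comp_polyE poly_def; apply: eq_bigr => i _.
  by rewrite exprZn scalerA.
rewrite coef_poly; case: ltnP => // H.
by rewrite nth_default // mul0r.
Qed.

Lemma derivn_top n p : (0 < n)%N -> (size p <= n.+1)%N ->
  p^`(n.-1) = (p`_n *+ n`!) *: 'X + (p`_n.-1 *+ (n.-1)`!)%:P.
Proof.
case: n => // n _ Hs /=.
apply/polyP => j; rewrite coef_derivn coefD coefZ coefX coefC.
case: j => [|[|j]] /=.
- by rewrite addn0 ffactnn mulr0 add0r.
- rewrite addn1; have -> : n.+1 ^_ n = n.+1`! by rewrite -(ffact_fact (leqnSn n)) subSnn muln1.
  by rewrite mulr1 addr0.
- rewrite nth_default ?mul0rn ?mulr0 ?addr0 // (leq_trans Hs) //.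
  by rewrite !addnS !ltnS leq_addr.
Qed.

Lemma nterms_scaleXn (c : K) n : (nterms (c *: 'X^n) <= 1)%N.
Proof.
have [->|c0] := eqVneq c 0; first by rewrite scale0r /nterms polyseq0.
rewrite /nterms -mul_polyC polyseqMXn ?polyC_eq0 // -cat_nseq count_cat count_nseq.
by rewrite polyseqC c0 /= eqxx c0.
Qed.

Lemma roots_finite p : p != 0 -> exists s : seq K, forall x, root p x -> x \in s.
Proof.
move: {2}(size p) (leqnn (size p)) => m; elim: m p => [|m IH] p Hs p0.
  by move: p0; rewrite -size_poly_eq0; move: Hs; rewrite leqn0 => ->.
case: (classic (exists x, root p x)) => [[x0 r0]|Hn]; last first.
  by exists [::] => x rx; exfalso; apply: Hn; exists x.
have [q Eq] := factor_theorem p x0 r0 .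
have q0 : q != 0 by apply: contraNneq p0 => q0; rewrite Eq q0 mul0r.
have [|s Hs'] := IH q _ q0.
  move: Hs; rewrite Eq size_mul ?polyXsubC_eq0 // size_XsubC addn2 /=.
  by [].
exists (x0 :: s) => x; rewrite Eq rootM root_XsubC in_cons => /orP[/Hs'->|->];
  by rewrite ?orbT.
Qed.
Lemma aux_field (x y z f : K) : x != 0 -> y != 0 ->
  x * (y * f) * (0 + - z / (y * x)) + z * f = 0.
Proof. by move=> x0 y0; field; rewrite x0 y0. Qed.
End Aux.

Theorem lemma4p1 (K : fieldType) (F : {poly K}) :
  [pchar K] =i pred0 ->
  (forall u v : {poly K}, size u = 2%N -> size v = 2%N ->
     (2 <= nterms ((u \Po F) \Po v))%N) ->
  exists s : seq ({poly K} * {poly K}),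
    forall a b : {poly K}, size a = 2%N -> size b = 2%N ->
      F \Po b = a \Po F -> (a, b) \in s.
Proof.
move=> Hch Hyp.
have Hn0 : forall m, (m%:R == 0 :> K) = (m == 0)%N by apply/pcharf0P.
pose n := (size F).-1.
pose c := - (F`_n.-1) / (n%:R * F`_n).
pose G := F \Po ('X + c%:P).
have sX : size ('X + c%:P) = 2 by rewrite size_XaddC.
have szG : size G = size F by rewrite size_comp_poly2.
have szGn : (size G <= n.+1)%N by rewrite szG leqSpred.
have GnF : G`_n = F`_n.
  have := @lead_coef_comp _ F ('X + c%:P); rewrite sX lead_coefXaddC expr1n mulr1 => H.
  by have := H isT; rewrite /lead_coef szG.
have [i /andP[i0 iln] Gi] : exists2 i, (0 < i < n)%N & G`_i != 0.
  case: (classic (exists2 i, (0 < i < n)%N & G`_i != 0)) => // Hno; exfalso.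
  have := Hyp ('X - (G`_0)%:P) ('X + c%:P) (size_XsubC _) sX.
  rewrite comp_polyB comp_polyX comp_polyC comp_polyB comp_polyC -/G.
  set Q := G - (G`_0)%:P.
  have -> : Q = Q`_n *: 'X^n.
    apply/polyP => j; rewrite coefZ coefXn.
    have [->|jn] := eqVneq j n; first by rewrite mulr1.
    rewrite mulr0 /Q coefB coefC.
    case: j jn => [|j] jn /=; first by rewrite subrr.
    rewrite subr0; case: (ltnP j.+1 n) => Hj.
      by apply/eqP; apply: contraT => Hg; exfalso; apply: Hno; exists j.+1.
    by rewrite nth_default // (leq_trans szGn) // ltn_neqAle eq_sym jn Hj.
  by move=> H; have := leq_trans H (nterms_scaleXn _ _).
have n0 : (0 < n)%N by apply: leq_trans iln.
have szF : size F = n.+1 by move: iln; rewrite /n; case: (size F).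
have Fn0 : F`_n != 0.
  have : lead_coef F != 0 by rewrite lead_coef_eq0 -size_poly_eq0 szF.
  by rewrite /lead_coef szF.
have Gn0 : G`_n != 0 by rewrite GnF.
have fn : n`! = (n * (n.-1)`!)%N by move: n0; case: (n)...
have f0 : ((n.-1)`!)%:R != 0 :> K by rewrite Hn0 -lt0n fact_gt0.
have nn0 : n%:R != 0 :> K by rewrite Hn0 -lt0n.
have Gn1 : G`_n.-1 = 0.
  have E1 := derivn_comp_lin F n.-1 1 c.
  rewrite scale1r expr1n scale1r -/G in E1.
  move: (congr1 (horner^~ 0) E1); rewrite (derivn_top _ _ n0 szGn) horner_comp (derivn_top _ _ n0 (eq_leq szF)).
  rewrite !(hornerD, hornerZ, hornerX, hornerC) mulr0 add0r.
  rewrite -[G`_n.-1 *+ _]mulr_natr -[F`_n.-1 *+ _]mulr_natr -[F`_n *+ _]mulr_natr fn natrM /c => E2.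
  have : G`_n.-1 * ((n.-1)`!)%:R = 0.
    by rewrite E2 aux_field.
  by move/eqP; rewrite mulf_eq0 (negPf f0) orbF => /eqP.
have GD : G^`(n.-1) = (G`_n *+ n`!) *: 'X.
  by rewrite (derivn_top _ _ n0 szGn) Gn1 mul0rn addr0.
have ni0 : (0 < n - i)%N by rewrite subn_gt0.
have [rs Hrs] := @roots_finite K ('X^(n-i) - 1%:P) (monic_neq0 (monicXnsubC _ ni0)).
exists [seq (g ^+ n *: 'X + (G`_0 - g ^+ n * G`_0)%:P, g *: 'X + (c - g * c)%:P) | g <- rs].
move=> a b sa sb E.
have ra := lin_repr _ (eq_leq sa); have rb := lin_repr _ (eq_leq sb).
have b10 : b`_1 != 0.
  have : lead_coef b != 0 by rewrite lead_coef_eq0 -size_poly_eq0 sb.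
  by rewrite /lead_coef sb.
have a10 : a`_1 != 0.
  have : lead_coef a != 0 by rewrite lead_coef_eq0 -size_poly_eq0 sa.
  by rewrite /lead_coef sa.
set g := b`_1; set a1 := a`_1; set a0 := a`_0; set b0 := b`_0.
pose d := g * c + b0 - c.
have EG : G \Po (g *: 'X + d%:P) = a1 *: G + a0%:P.
  have Hh : ('X + c%:P) \Po (g *: 'X + d%:P) = b \Po ('X + c%:P).
    rewrite comp_polyD comp_polyX comp_polyC rb comp_polyD comp_polyZ comp_polyX comp_polyC.
    apply/polyP => j; rewrite !(coefD, coefZ, coefX, coefC) /d.
    case: j => [|[|j]] /=; rewrite ?mulr0 ?mulr1 ?add0r ?addr0 //.
    all: try by rewrite ?subrK ?mulr1 ?mulr0.
  have -> : G \Po (g *: 'X + d%:P) = F \Po (('X + c%:P) \Po (g *: 'X + d%:P)) by rewrite comp_polyA.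
  rewrite Hh comp_polyA E -comp_polyA -/G {1}ra.
  by rewrite comp_polyD comp_polyZ comp_polyX comp_polyC.
have n2 : (1 < n)%N := leq_ltn_trans i0 iln.
have n1 : (n.-1 == 0)%N = false by move: n2; case: (n) => [|[|m]].
have Hd : d = 0.
  have E3 := congr1 (derivn n.-1) EG.
  rewrite derivn_comp_lin derivnD derivnZ derivnC n1 addr0 GD in E3.
  move: (congr1 (horner^~ 0) E3).
  rewrite !(hornerD, hornerZ, horner_comp, hornerX, hornerC) !mulr0 add0r.
  move/eqP; rewrite !mulf_eq0 (negPf (expf_neq0 _ b10)) /=.
  rewrite -mulr_natr mulf_eq0 (negPf Gn0) /= Hn0 (negPf (lt0n_neq0 (fact_gt0 n))) /=.
  by move/eqP.
rewrite Hd addr0 in EG.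
have CC : forall j, G`_j * g ^+ j = a1 * G`_j + (if j == 0%N then a0 else 0).
  move=> j; have := congr1 (fun p : {poly K} => p`_j) EG.
  by rewrite /= coef_comp_scaleX coefD coefZ coefC.
have Ha1 : a1 = g ^+ n.
  have := CC n; rewrite (negPf (lt0n_neq0 n0)) addr0 mulrC => /mulIf.
  by move=> H; rewrite H.
have g0 : g != 0 := b10.
have Hgi : g ^+ i = g ^+ n.
  have := CC i; rewrite (negPf (lt0n_neq0 i0)) addr0 Ha1 mulrC => /mulIf.
  by move=> H; rewrite H.
have Hr : root ('X^(n - i) - 1%:P) g.
  rewrite rootE !(hornerD, hornerN, hornerXn, hornerC) subr_eq0.
  apply/eqP; apply: (mulfI (expf_neq0 i g0)).
  by rewrite -exprD subnKC ?(ltnW iln) // mulr1.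
have Ha0 : a0 = G`_0 - g ^+ n * G`_0.
  have := CC 0%N; rewrite expr0 mulr1 eqxx => H.
  apply/eqP; rewrite eq_sym subr_eq {1}H Ha1 addrC.
  by [].
have Hb0 : b0 = c - g * c.
  have H : g * c + b0 = c by apply/eqP; rewrite -subr_eq0; apply/eqP.
  by rewrite -[X in X - g * c]H addrAC subrr add0r.
apply/mapP; exists g; first exact: Hrs.
congr (_, _).
- by rewrite {1}ra; congr (_ *: _ + _%:P).
- by rewrite {1}rb; congr (_ *: _ + _%:P).
Qed.
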